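(* Let $(b_n)_{n\ge 0}$ and $(p_{2n})_{n\ge 1}$ be sequences of non-negative integers, not all $p_{2n}$ zero, and let $$V(x)=\sum_{n=0}^\infty b_n x^n,\qquad U(x)=\sum_{n=1}^\infty p_{2n}x^n$$ have radii of convergence $x_V$ and $x_U$ respectively, where $0<x_U<x_V\le 1$ and $V(x_V^-):=\lim_{x\to x_V^-}V(x)=\infty$. Write $U(x_U^-):=\lim_{x\to x_U^-}U(x)\in(0,\infty]$. For $w\ge 1$ let $$Z(x,w)=\frac{V(wx)}{1-U(x)V(wx)}=\sum_{n\ge 0} Z_n(w)x^n,$$ let $x_c(w)$ denote the radius of convergence of this power series in $x$, and let $f(w)=-\log x_c(w)$ (the free energy). Define $w_c$ as follows: if $U(x_U^-)=\infty$ or $U(x_U^-)V(x_U)\ge 1$, set $w_c=1$; otherwise ($U(x_U^-)<\infty$ and $U(x_U^-)V(x_U)<1$) let $w_c>1$ be the number defined by $U(x_U^-)V(w_c x_U)=1$. Then $$f(w)=\begin{cases}-\log x_c(w), & w_c\le w<\infty,\\ -\log x_U, & 1<w<w_c,\end{cases}$$ where, for $w_c\le w<\infty$, $x_c(w)$ is the unique positive solution $x\in(0,x_U]$ of $U(x)V(wx)=1$ (with $U(x_U)$ interpreted as $U(x_U^-)$).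
   Context: This is the Poland–Scheraga model of DNA denaturation: $b_n$ counts paths (double-stranded segments) of length $n$, $p_{2n}$ counts marked loops (single-stranded segments) of length $2n$, and $w=e^{-E/kT}\ge 1$ is the Boltzmann factor of the attractive energy per path bond. The free energy is $f(w)=\lim_{n\to\infty}\frac1n\log Z_n(w)=-\log x_c(w)$. *)

(* Defs.v *)
From Stdlib Require Import Reals.
From Coquelicot Require Import Coquelicot.
Open Scope R_scope.

Definition conv (a c : nat -> R) (n : nat) : R :=
  sum_f_R0 (fun i => a i * c (n - i)%nat) n.

Fixpoint cpow (a : nat -> R) (k : nat) : nat -> R :=
  match k with
  | O => fun n => match n with O => 1 | _ => 0 end
  | S k' => conv a (cpow a k')
  end.

Definition Vcoef (b : nat -> nat) (n : nat) : R := INR (b n).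

(* Coefficients of U(x) = sum_{n>=1} p_{2n} x^n; here p n stands for p_{2n},
   and the value p 0 is irrelevant (the constant term of U is 0). *)
Definition Ucoef (p : nat -> nat) (n : nat) : R :=
  match n with O => 0 | _ => INR (p n) end.

Definition Vwcoef (b : nat -> nat) (w : R) (n : nat) : R := INR (b n) * w ^ n.

(* Z_n(w): coefficient of x^n in V(wx)/(1 - U(x)V(wx)) = V(wx) sum_k (U(x)V(wx))^k.
   Since U(0) = 0, only the terms k <= n contribute to the coefficient of x^n. *)
Definition Zcoef (b p : nat -> nat) (w : R) (n : nat) : R :=
  sum_f_R0 (fun k => conv (Vwcoef b w) (cpow (conv (Ucoef p) (Vwcoef b w)) k) n) n.

Definition xc (b p : nat -> nat) (w : R) : Rbar := CV_radius (Zcoef b p w).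

Definition free_energy (b p : nat -> nat) (w : R) : R := - ln (real (xc b p w)).

(* U extended to (0, x_U] with U(x_U) := U(x_U^-) = Ulim. *)
Definition Uext (p : nat -> nat) (xU : R) (Ulim : Rbar) (x : R) : Rbar :=
  if Rlt_dec x xU then Finite (PSeries (Ucoef p) x) else Ulim.

Definition is_solution (b p : nat -> nat) (xU xV : R) (Ulim : Rbar) (w x : R) : Prop :=
  0 < x /\ x <= xU /\ w * x < xV /\
  Rbar_mult (Uext p xU Ulim x) (Finite (PSeries (Vcoef b) (w * x))) = Finite 1.

Definition is_wc (b : nat -> nat) (xU xV : R) (Ulim : Rbar) (wc : R) : Prop :=
  (Ulim = p_infty \/ Rbar_le (Finite 1) (Rbar_mult Ulim (Finite (PSeries (Vcoef b) xU)))
     -> wc = 1) /\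
  (~ (Ulim = p_infty \/ Rbar_le (Finite 1) (Rbar_mult Ulim (Finite (PSeries (Vcoef b) xU))))
     -> 1 < wc /\ wc * xU < xV /\
        Rbar_mult Ulim (Finite (PSeries (Vcoef b) (wc * xU))) = Finite 1).

(* Main.v *)
Require Import Defs.
From Stdlib Require Import Reals Lra Lia Classical Arith.
From Coquelicot Require Import Coquelicot.
Open Scope R_scope.

Lemma sum_nonneg_mono (f : nat -> R) (N M : nat) :
  (forall n, 0 <= f n) -> (N <= M)%nat -> sum_f_R0 f N <= sum_f_R0 f M.
Proof. intros H HNM. induction HNM. lra. simpl. specialize (H (S m)). lra. Qed.

Lemma sum_ge_term (f : nat -> R) (i N : nat) :
  (forall n, 0 <= f n) -> (i <= N)%nat -> f i <= sum_f_R0 f N.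
Proof.
  intros H Hi. apply Rle_trans with (sum_f_R0 f i).
  - destruct i; simpl. lra. pose proof (cond_pos_sum f i H). lra.
  - apply sum_nonneg_mono; auto.
Qed.

Lemma series_ge_partial (s : nat -> R) l N :
  (forall n, 0 <= s n) -> is_series s l -> sum_f_R0 s N <= l.
Proof.
  intros H Hs.
  assert (Rbar_le (sum_f_R0 s N) l).
  { apply (filterlim_le (F:=eventually) (fun _ => sum_f_R0 s N) (sum_n s)).
    - exists N. intros M HM. rewrite sum_n_Reals. apply sum_nonneg_mono; auto.
    - apply filterlim_const.
    - exact Hs. }
  exact H0.
Qed.

Lemma series_le_lim (s t : nat -> R) ls lt :
  (forall n, s n <= t n) -> is_series s ls -> is_series t lt -> ls <= lt.
Proof.
  intros H Hs Ht.
  assert (Rbar_le ls lt).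
  { apply (filterlim_le (F:=eventually) (sum_n s) (sum_n t)).
    - exists O. intros M HM. rewrite !sum_n_Reals. apply sum_Rle; auto.
    - exact Hs.
    - exact Ht. }
  exact H0.
Qed.

Lemma ex_series_bounded (s : nat -> R) B :
  (forall n, 0 <= s n) -> (forall N, sum_f_R0 s N <= B) -> ex_series s.
Proof.
  intros H HB. destruct (growing_cv (sum_f_R0 s)) as [l Hl].
  - intro n. simpl. specialize (H (S n)). lra.
  - exists B. intros x [n ->]. apply HB.
  - exists l. apply is_series_Reals. exact Hl.
Qed.

Lemma radius_eq (a : nat -> R) (x : R) :
  (forall n, 0 <= a n) -> 0 <= x ->
  (forall y, 0 <= y < x -> ex_series (fun n => a n * y ^ n)) ->
  (forall r, x < r -> ~ ex_series (fun n => a n * r ^ n)) ->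
  CV_radius a = Finite x.
Proof.
  intros Ha Hx Hin Hout. unfold CV_radius. apply is_lub_Rbar_unique. split.
  - intros r Hr. simpl. destruct (Rle_lt_dec r x) as [h|h]; auto. exfalso.
    apply (Hout r h). refine (ex_series_ext _ _ _ Hr). intro n.
    rewrite Rabs_right; auto. apply Rle_ge, Rmult_le_pos; auto. apply pow_le; lra.
  - intros bnd Hb. pose proof (Hb 0 (CV_disk_0 a)) as H0.
    destruct bnd as [bb| |]; simpl in *; auto.
    destruct (Rle_lt_dec x bb) as [h|h]; auto. exfalso.
    assert (Hy : 0 <= (bb + x)/2 < x) by lra.
    assert (CV_disk a ((bb+x)/2)).
    { unfold CV_disk. refine (ex_series_ext _ _ _ (Hin _ Hy)). intro n.
      rewrite Rabs_right; auto. apply Rle_ge, Rmult_le_pos; auto. apply pow_le; lra. }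
    pose proof (Hb _ H). simpl in H1. lra.
Qed.

Lemma radius_gt (a : nat -> R) t t' :
  (forall n, 0 <= a n) -> 0 <= t < t' -> ex_series (fun n => a n * t' ^ n) ->
  Rbar_lt (Rabs t) (CV_radius a).
Proof.
  intros Ha Ht He.
  assert (Rbar_le t' (CV_radius a)).
  { apply (proj1 (Lub_Rbar_correct (CV_disk a))). unfold CV_disk.
    refine (ex_series_ext _ _ _ He). intro n.
    rewrite Rabs_right; auto. apply Rle_ge, Rmult_le_pos; auto. apply pow_le; lra. }
  apply Rbar_lt_le_trans with t'; auto. simpl. rewrite Rabs_right; lra.
Qed.

Lemma ev_ex {T} (F : (T -> Prop) -> Prop) {FF : ProperFilter F} (P : T -> Prop) :
  F P -> exists x, P x.
Proof.
  intros HP. exact (@Hierarchy.filter_ex T F FF P HP).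
Qed.

Lemma at_left_gt a x : a < x -> at_left x (fun y => a < y).
Proof.
  intros H. unfold at_left, within. apply (filter_imp (fun y => a < y)).
  - auto.
  - apply (open_gt a). exact H.
Qed.

Lemma pow_lt_strict s t n : 0 <= s < t -> (1 <= n)%nat -> s ^ n < t ^ n.
Proof.
  intros H Hn. induction Hn. simpl; lra.
  simpl. assert (0 <= s ^ m) by (apply pow_le; lra). nra.
Qed.

Lemma lim_mult {T} (F : (T -> Prop) -> Prop) {FF : Filter F} (f g : T -> R) a b :
  filterlim f F (locally a) -> filterlim g F (locally b) ->
  filterlim (fun y => f y * g y) F (locally (a * b)).
Proof.
  intros Hf Hg. exact (filterlim_comp_2 f g Rmult Hf Hg (filterlim_mult a b)).
Qed.

Lemma lim_plus {T} (F : (T -> Prop) -> Prop) {FF : Filter F} (f g : T -> R) a b :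
  filterlim f F (locally a) -> filterlim g F (locally b) ->
  filterlim (fun y => f y + g y) F (locally (a + b)).
Proof.
  intros Hf Hg. exact (filterlim_comp_2 f g Rplus Hf Hg (filterlim_plus a b)).
Qed.

Lemma is_series_ext_R (a b : nat -> R) (l : R) :
  (forall n, a n = b n) -> is_series a l -> is_series b l.
Proof. intros H Ha. exact (is_series_ext a b l H Ha). Qed.

Lemma is_series_plus_R (a b : nat -> R) (la lb : R) :
  is_series a la -> is_series b lb -> is_series (fun n => a n + b n) (la + lb).
Proof. intros Ha Hb. exact (is_series_plus a b la lb Ha Hb). Qed.

Lemma is_series_minus_R (a b : nat -> R) (la lb : R) :
  is_series a la -> is_series b lb -> is_series (fun n => a n - b n) (la - lb).
Proof. intros Ha Hb. exact (is_series_minus a b la lb Ha Hb). Qed.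

Lemma series_nonneg (s : nat -> R) l : (forall n, 0 <= s n) -> is_series s l -> 0 <= l.
Proof. intros H Hs. pose proof (series_ge_partial s l 0 H Hs). simpl in H0. specialize (H O). lra. Qed.

Lemma at_left_lt x : at_left x (fun y => y < x).
Proof. unfold at_left, within. apply filter_forall. auto. Qed.

Lemma lim_pow {T} (F : (T -> Prop) -> Prop) {FF : Filter F} (f : T -> R) a k :
  filterlim f F (locally a) -> filterlim (fun y => f y ^ k) F (locally (a ^ k)).
Proof.
  intros Hf. induction k. simpl. apply filterlim_const.
  simpl. apply lim_mult; auto.
Qed.

Lemma lim_sum {T} (F : (T -> Prop) -> Prop) {FF : Filter F} (g : nat -> T -> R) c K :
  (forall k, filterlim (g k) F (locally (c k))) ->
  filterlim (fun y => sum_f_R0 (fun k => g k y) K) F (locally (sum_f_R0 c K)).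
Proof.
  intros Hg. induction K. simpl. apply Hg.
  simpl. apply lim_plus; auto.
Qed.

#[global] Instance at_left_Filter x : Filter (at_left x) := @filter_filter _ _ (at_left_proper_filter x).

Lemma ex_series_le_R (a b : nat -> R) :
  (forall n, 0 <= a n <= b n) -> ex_series b -> ex_series a.
Proof.
  intros H Hb. apply (ex_series_le a b); auto. intro n.
  change (Rabs (a n) <= b n). rewrite Rabs_right; [apply H| apply Rle_ge, H].
Qed.

Lemma ex_series_scal_R (c : R) (a : nat -> R) :
  ex_series a -> ex_series (fun n => c * a n).
Proof. intros H. exact (ex_series_scal c a H). Qed.

Definition Pc b p w := conv (Ucoef p) (Vwcoef b w).
Definition Tc b p w k := conv (Vwcoef b w) (cpow (Pc b p w) k).
Definition Fc b p w K n := sum_f_R0 (fun k => Tc b p w k n) K.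

Lemma conv_nonneg a c : (forall n, 0 <= a n) -> (forall n, 0 <= c n) ->
  forall n, 0 <= conv a c n.
Proof. intros; unfold conv; apply cond_pos_sum; intros; apply Rmult_le_pos; auto. Qed.

Lemma cpow_nonneg a : (forall n, 0 <= a n) -> forall k n, 0 <= cpow a k n.
Proof. intros H; induction k; simpl; intros. destruct n; lra. apply conv_nonneg; auto. Qed.

Lemma Vw_nonneg b w : 0 <= w -> forall n, 0 <= Vwcoef b w n.
Proof. unfold Vwcoef; intros; apply Rmult_le_pos; [apply pos_INR| apply pow_le; auto]. Qed.

Lemma U_nonneg p n : 0 <= Ucoef p n.
Proof. destruct n; simpl; [lra| apply pos_INR]. Qed.

Lemma V_nonneg b n : 0 <= Vcoef b n.
Proof. apply pos_INR. Qed.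

Lemma P_nonneg b p w : 0 <= w -> forall n, 0 <= Pc b p w n.
Proof. intros; apply conv_nonneg; [apply U_nonneg|apply Vw_nonneg; auto]. Qed.

Lemma T_nonneg b p w k n : 0 <= w -> 0 <= Tc b p w k n.
Proof. intros; apply conv_nonneg; [apply Vw_nonneg; auto| apply cpow_nonneg, P_nonneg; auto]. Qed.

Lemma F_nonneg b p w K n : 0 <= w -> 0 <= Fc b p w K n.
Proof. intros; apply cond_pos_sum; intros; apply T_nonneg; auto. Qed.

Lemma P0 b p w : Pc b p w 0 = 0.
Proof. unfold Pc, conv; simpl. ring. Qed.

Lemma cpow_low b p w : forall k n, (n < k)%nat -> cpow (Pc b p w) k n = 0.
Proof.
  induction k; intros n Hn. lia. simpl. unfold conv. apply sum_eq_R0. intros i Hi.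
  destruct i. rewrite P0; ring. rewrite IHk. ring. lia.
Qed.

Lemma T_low b p w k n : (n < k)%nat -> Tc b p w k n = 0.
Proof. intros; unfold Tc, conv; apply sum_eq_R0; intros i Hi; rewrite cpow_low; [ring|lia]. Qed.

Lemma F_eq_Z b p w K n : (n <= K)%nat -> Fc b p w K n = Zcoef b p w n.
Proof.
  intros H; induction H. reflexivity.
  unfold Fc in *; simpl; rewrite IHle, T_low; [ring|lia].
Qed.

Lemma Z_nonneg b p w n : 0 <= w -> 0 <= Zcoef b p w n.
Proof. intros; rewrite <- (F_eq_Z b p w n n); auto. apply F_nonneg; auto. Qed.

Lemma F_le_Z b p w K n : 0 <= w -> Fc b p w K n <= Zcoef b p w n.
Proof.
  intros Hw. destruct (le_lt_dec n K). rewrite F_eq_Z; auto; lra.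
  rewrite <- (F_eq_Z b p w n n); auto. apply sum_nonneg_mono; [intros; apply T_nonneg; auto | lia].
Qed.

Lemma conv_delta a j : conv a (cpow a 0) j = a j.
Proof.
  unfold conv. destruct j. simpl. ring.
  simpl sum_f_R0 at 1. rewrite sum_eq_R0. rewrite Nat.sub_diag. simpl. ring.
  intros i Hi. destruct i; simpl. ring. destruct (j - i)%nat eqn:E; [lia| ring].
Qed.

Lemma Z_lower b p w m n : 0 <= w -> (m + m <= n)%nat ->
  Vwcoef b w m * (Vwcoef b w m * Ucoef p (n - m - m)) <= Zcoef b p w n.
Proof.
  intros Hw Hn. apply Rle_trans with (Tc b p w 1 n).
  2:{ apply Rle_trans with (Fc b p w 1 n). unfold Fc. simpl.
      pose proof (T_nonneg b p w 0 n Hw). lra. apply F_le_Z; auto. }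
  unfold Tc. simpl cpow. 
  apply Rle_trans with (Vwcoef b w m * conv (Pc b p w) (cpow (Pc b p w) 0) (n - m)).
  2:{ unfold conv at 1.
      apply (sum_ge_term (fun i => Vwcoef b w i * conv (Pc b p w) (cpow (Pc b p w) 0) (n - i)) m n).
      intros; apply Rmult_le_pos; [apply Vw_nonneg; auto| apply conv_nonneg; [apply P_nonneg; auto|apply cpow_nonneg, P_nonneg; auto]].
      lia. }
  rewrite conv_delta. apply Rmult_le_compat_l. apply Vw_nonneg; auto.
  unfold Pc, conv.
  replace (Vwcoef b w m * Ucoef p (n - m - m)) with (Ucoef p (n - m - m) * Vwcoef b w (n - m - (n - m - m))).
  apply (sum_ge_term (fun k => Ucoef p k * Vwcoef b w (n - m - k))).
  intros; apply Rmult_le_pos; [apply U_nonneg| apply Vw_nonneg; auto]. lia.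
  replace (n - m - (n - m - m))%nat with m by lia. ring.
Qed.

Definition Uf p t := PSeries (Ucoef p) t.
Definition Vf b t := PSeries (Vcoef b) t.
Definition qf b p w t := Uf p t * Vf b (w * t).

Lemma is_series_U p xU t : CV_radius (Ucoef p) = Finite xU -> 0 <= t < xU ->
  is_series (fun n => Ucoef p n * t ^ n) (Uf p t).
Proof.
  intros HU Ht. apply is_pseries_R. apply PSeries_correct. apply CV_radius_inside.
  rewrite HU, Rabs_right; simpl; lra.
Qed.

Lemma is_series_V b xV s : CV_radius (Vcoef b) = Finite xV -> 0 <= s < xV ->
  is_series (fun n => Vcoef b n * s ^ n) (Vf b s).
Proof.
  intros HV Ht. apply is_pseries_R. apply PSeries_correct. apply CV_radius_inside.
  rewrite HV, Rabs_right; simpl; lra.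
Qed.

Lemma is_series_Vw b xV w t : CV_radius (Vcoef b) = Finite xV -> 0 <= w -> 0 <= t -> w * t < xV ->
  is_series (fun n => Vwcoef b w n * t ^ n) (Vf b (w * t)).
Proof.
  intros HV Hw Ht Hwt. assert (0 <= w * t) by nra.
  refine (is_series_ext_R _ _ _ _ (is_series_V b xV (w*t) HV ltac:(lra))).
  intro n. unfold Vwcoef, Vcoef. rewrite Rpow_mult_distr. ring.
Qed.

Definition Good w xU xV t := 0 <= t /\ t < xU /\ w * t < xV.

Lemma good_open w xU xV t : 0 <= w -> Good w xU xV t -> exists t', t < t' /\ Good w xU xV t'.
Proof.
  intros Hw [H1 [H2 H3]].
  set (d := Rmin (xU - t) ((xV - w * t) / (w + 1)) / 2).
  assert (Hd1 : 0 < (xV - w * t) / (w + 1)) by (apply Rdiv_lt_0_compat; lra).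
  assert (Hd : 0 < d).
  { unfold d. assert (0 < Rmin (xU - t) ((xV - w * t) / (w + 1))) by (apply Rmin_glb_lt; lra). lra. }
  assert (Hd2 : d <= (xU - t)/2) by (unfold d; pose proof (Rmin_l (xU - t) ((xV - w * t) / (w + 1))); lra).
  assert (Hd3 : d <= ((xV - w * t) / (w + 1))/2) by (unfold d; pose proof (Rmin_r (xU - t) ((xV - w * t) / (w + 1))); lra).
  exists (t + d). split. lra. split. lra. split. lra.
  assert (w * d <= (xV - w*t)/2).
  { apply Rle_trans with (w * (((xV - w * t) / (w + 1))/2)). apply Rmult_le_compat_l; lra.
    replace (w * (((xV - w * t) / (w + 1))/2)) with ((w / (w+1)) * ((xV - w * t) / 2)) by (field; lra).
    assert (w / (w+1) <= 1).
    { apply Rmult_le_reg_r with (w+1). lra. unfold Rdiv. rewrite Rmult_assoc, Rinv_l; lra. }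
    assert (0 <= (xV - w * t) / 2) by lra. nra. }
  nra.
Qed.

Lemma P_series b p w xU xV t : CV_radius (Ucoef p) = Finite xU -> CV_radius (Vcoef b) = Finite xV ->
  0 <= w -> Good w xU xV t ->
  is_series (fun n => Pc b p w n * t ^ n) (qf b p w t).
Proof.
  intros HU HV Hw Hg. destruct (good_open w xU xV t Hw Hg) as [t' [Htt' Hg']].
  destruct Hg as [G1 [G2 G3]]. destruct Hg' as [G1' [G2' G3']].
  apply is_pseries_R. unfold Pc, qf.
  apply (is_pseries_mult (Ucoef p) (Vwcoef b w)).
  - apply is_pseries_R. apply is_series_U with xU; auto.
  - apply is_pseries_R. apply is_series_Vw with xV; auto.
  - rewrite HU, Rabs_right; simpl; lra.
  - apply radius_gt with t'. apply Vw_nonneg; auto. lra.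
    eexists. apply is_series_Vw with xV; auto.
Qed.

Lemma cpow_series b p w xU xV : CV_radius (Ucoef p) = Finite xU -> CV_radius (Vcoef b) = Finite xV ->
  0 <= w -> forall k t, Good w xU xV t ->
  is_series (fun n => cpow (Pc b p w) k n * t ^ n) (qf b p w t ^ k).
Proof.
  intros HU HV Hw. induction k; intros t Hg.
  - apply is_series_Reals. intros eps Heps. exists O. intros N _.
    assert (sum_f_R0 (fun n => cpow (Pc b p w) 0 n * t ^ n) N = 1).
    { induction N. simpl. ring. rewrite tech5, IHN. simpl. ring. }
    unfold R_dist. rewrite H. simpl. rewrite Rminus_diag, Rabs_R0. lra.
  - destruct (good_open w xU xV t Hw Hg) as [t' [Htt' Hg']].
    apply is_pseries_R. simpl cpow. simpl pow.
    apply (is_pseries_mult (Pc b p w) (cpow (Pc b p w) k)).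
    + apply is_pseries_R. apply P_series with xU xV; auto.
    + apply is_pseries_R. apply IHk; auto.
    + destruct Hg as [G1 _]. apply radius_gt with t'. apply P_nonneg; auto. lra.
      eexists. apply P_series with xU xV; auto.
    + destruct Hg as [G1 _]. apply radius_gt with t'. apply cpow_nonneg, P_nonneg; auto. lra.
      eexists. apply IHk; auto.
Qed.

Lemma T_series b p w xU xV k t : CV_radius (Ucoef p) = Finite xU -> CV_radius (Vcoef b) = Finite xV ->
  0 <= w -> Good w xU xV t ->
  is_series (fun n => Tc b p w k n * t ^ n) (Vf b (w * t) * qf b p w t ^ k).
Proof.
  intros HU HV Hw Hg. destruct (good_open w xU xV t Hw Hg) as [t' [Htt' Hg']].
  pose proof Hg as [G1 [G2 G3]]. pose proof Hg' as [G1' [G2' G3']].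
  apply is_pseries_R. unfold Tc.
  apply (is_pseries_mult (Vwcoef b w) (cpow (Pc b p w) k)).
  - apply is_pseries_R. apply is_series_Vw with xV; auto.
  - apply is_pseries_R. apply cpow_series with xU xV; auto.
  - apply radius_gt with t'. apply Vw_nonneg; auto. lra.
    eexists. apply is_series_Vw with xV; auto.
  - apply radius_gt with t'. apply cpow_nonneg, P_nonneg; auto. lra.
    eexists. apply cpow_series with xU xV; auto.
Qed.

Lemma F_series b p w xU xV K t : CV_radius (Ucoef p) = Finite xU -> CV_radius (Vcoef b) = Finite xV ->
  0 <= w -> Good w xU xV t ->
  is_series (fun n => Fc b p w K n * t ^ n)
    (Vf b (w * t) * sum_f_R0 (fun k => qf b p w t ^ k) K).
Proof.
  intros HU HV Hw Hg. induction K.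
  - simpl. refine (is_series_ext_R _ _ _ _ (T_series b p w xU xV 0 t HU HV Hw Hg)).
    intro n. reflexivity.
  - pose proof (is_series_plus_R _ _ _ _ IHK (T_series b p w xU xV (S K) t HU HV Hw Hg)) as H.
    simpl sum_f_R0. rewrite Rmult_plus_distr_l.
    refine (is_series_ext_R _ _ _ _ H). intro n. unfold Fc. simpl sum_f_R0.
    ring.
Qed.

Lemma U_mono p xU s t : CV_radius (Ucoef p) = Finite xU -> 0 <= s <= t -> t < xU -> Uf p s <= Uf p t.
Proof.
  intros HU Hs Ht. apply (series_le_lim (fun n => Ucoef p n * s ^ n) (fun n => Ucoef p n * t ^ n)).
  intro n. apply Rmult_le_compat_l. apply U_nonneg. apply pow_incr; lra.
  apply is_series_U with xU; auto; lra. apply is_series_U with xU; auto; lra.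
Qed.

Lemma V_mono b xV s t : CV_radius (Vcoef b) = Finite xV -> 0 <= s <= t -> t < xV -> Vf b s <= Vf b t.
Proof.
  intros HV Hs Ht. apply (series_le_lim (fun n => Vcoef b n * s ^ n) (fun n => Vcoef b n * t ^ n)).
  intro n. apply Rmult_le_compat_l. apply V_nonneg. apply pow_incr; lra.
  apply is_series_V with xV; auto; lra. apply is_series_V with xV; auto; lra.
Qed.

Lemma U_ge0 p xU t : CV_radius (Ucoef p) = Finite xU -> 0 <= t < xU -> 0 <= Uf p t.
Proof.
  intros HU Ht. apply (series_nonneg (fun n => Ucoef p n * t ^ n)).
  intro n; apply Rmult_le_pos; [apply U_nonneg| apply pow_le; lra].
  apply is_series_U with xU; auto.
Qed.

Lemma V_ge0 b xV t : CV_radius (Vcoef b) = Finite xV -> 0 <= t < xV -> 0 <= Vf b t.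
Proof.
  intros HV Ht. apply (series_nonneg (fun n => Vcoef b n * t ^ n)).
  intro n; apply Rmult_le_pos; [apply V_nonneg| apply pow_le; lra].
  apply is_series_V with xV; auto.
Qed.

Lemma U_strict p xU s t : CV_radius (Ucoef p) = Finite xU ->
  (exists n : nat, (1 <= n)%nat /\ p n <> 0%nat) ->
  0 <= s < t -> t < xU -> Uf p s < Uf p t.
Proof.
  intros HU [n0 [Hn0 Hp]] Hs Ht.
  pose proof (is_series_minus_R _ _ _ _ (is_series_U p xU t HU ltac:(lra)) (is_series_U p xU s HU ltac:(lra))) as H.
  assert (Hnn : forall n, 0 <= Ucoef p n * t ^ n - Ucoef p n * s ^ n).
  { intro n. assert (s ^ n <= t ^ n) by (apply pow_incr; lra).
    pose proof (U_nonneg p n). nra. }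
  pose proof (series_ge_partial _ _ n0 Hnn H) as H1.
  pose proof (sum_ge_term _ n0 n0 Hnn (le_n _)) as H2.
  assert (0 < Ucoef p n0 * t ^ n0 - Ucoef p n0 * s ^ n0).
  { assert (s ^ n0 < t ^ n0) by (apply pow_lt_strict; auto; lra).
    assert (0 < Ucoef p n0).
    { destruct n0. lia. simpl. apply lt_0_INR. lia. }
    nra. }
  lra.
Qed.

Lemma U0 p : Uf p 0 = 0.
Proof. unfold Uf. rewrite PSeries_0. reflexivity. Qed.

Lemma V_pos b xV t : CV_radius (Vcoef b) = Finite xV -> (exists m, b m <> 0%nat) ->
  0 < t < xV -> 0 < Vf b t.
Proof.
  intros HV [m Hm] Ht.
  assert (Hnn : forall n, 0 <= Vcoef b n * t ^ n).
  { intro n; apply Rmult_le_pos; [apply V_nonneg| apply pow_le; lra]. }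
  pose proof (series_ge_partial _ _ m Hnn (is_series_V b xV t HV ltac:(lra))) as H1.
  pose proof (sum_ge_term _ m m Hnn (le_n _)) as H2.
  assert (0 < Vcoef b m * t ^ m).
  { apply Rmult_lt_0_compat. unfold Vcoef. apply lt_0_INR. lia. apply pow_lt. lra. }
  lra.
Qed.

Lemma A_conv b p w xU xV t : CV_radius (Ucoef p) = Finite xU -> CV_radius (Vcoef b) = Finite xV ->
  0 <= w -> Good w xU xV t -> qf b p w t < 1 ->
  ex_series (fun n => Zcoef b p w n * t ^ n).
Proof.
  intros HU HV Hw Hg Hq. pose proof Hg as [G1 [G2 G3]].
  assert (HV0 : 0 <= Vf b (w * t)) by (apply V_ge0 with xV; auto; nra).
  assert (HU0 : 0 <= Uf p t) by (apply U_ge0 with xU; auto).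
  assert (Hq0 : 0 <= qf b p w t) by (unfold qf; nra).
  apply ex_series_bounded with (Vf b (w * t) / (1 - qf b p w t)).
  - intro n. apply Rmult_le_pos. apply Z_nonneg; auto. apply pow_le; lra.
  - intro N. rewrite (sum_eq _ (fun n => Fc b p w N n * t ^ n)) by (intros; rewrite F_eq_Z; auto).
    apply Rle_trans with (Vf b (w * t) * sum_f_R0 (fun k => qf b p w t ^ k) N).
    + apply series_ge_partial. intro n. apply Rmult_le_pos. apply F_nonneg; auto. apply pow_le; lra.
      apply F_series with xU xV; auto.
    + rewrite tech3 by lra. unfold Rdiv. apply Rmult_le_compat_l; [lra|].
      assert (0 <= qf b p w t ^ S N) by (apply pow_le; lra).
      assert (0 < / (1 - qf b p w t)) by (apply Rinv_0_lt_compat; lra). nra.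
Qed.

Lemma sum_ones K : sum_f_R0 (fun k => 1 ^ k) K = INR K + 1.
Proof. rewrite (sum_eq _ (fun _ => 1)) by (intros; apply pow1). rewrite sum_cte, S_INR. ring. Qed.

Lemma B_int b p w xU xV x : CV_radius (Ucoef p) = Finite xU -> CV_radius (Vcoef b) = Finite xV ->
  0 <= w -> Good w xU xV x -> qf b p w x = 1 ->
  ~ ex_series (fun n => Zcoef b p w n * x ^ n).
Proof.
  intros HU HV Hw Hg Hq HE. pose proof (Series_correct _ HE) as HS. set (S := Series _) in HS. pose proof Hg as [G1 [G2 G3]].
  assert (HV0 : 0 <= Vf b (w * x)) by (apply V_ge0 with xV; auto; nra).
  assert (Vp : 0 < Vf b (w * x)).
  { destruct HV0 as [h|h]; auto. unfold qf in Hq. rewrite <- h in Hq. lra. }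
  destruct (INR_unbounded (S / Vf b (w * x))) as [K HK].
  pose proof (series_le_lim (fun n => Fc b p w K n * x ^ n) (fun n => Zcoef b p w n * x ^ n) _ _
     (fun n => Rmult_le_compat_r _ _ _ (pow_le _ n G1) (F_le_Z b p w K n Hw))
     (F_series b p w xU xV K x HU HV Hw Hg) HS) as H.
  rewrite Hq, sum_ones in H.
  apply (Rmult_lt_compat_l (Vf b (w * x))) in HK; [|lra].
  replace (Vf b (w * x) * (S / Vf b (w * x))) with S in HK by (field; lra).
  nra.
Qed.

Lemma Vw_cont b xV w y : CV_radius (Vcoef b) = Finite xV -> Rabs (w * y) < xV ->
  filterlim (fun z => Vf b (w * z)) (locally y) (locally (Vf b (w * y))).
Proof.
  intros HV Hy.
  apply (continuous_comp (fun z => w * z) (Vf b)).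
  - exact (continuous_mult (fun _ => w) (fun z => z) y (continuous_const w y) (continuous_id y)).
  - apply continuity_pt_filterlim. apply PSeries_continuity. rewrite HV. exact Hy.
Qed.

Lemma U_cont p xU y : CV_radius (Ucoef p) = Finite xU -> Rabs y < xU ->
  filterlim (Uf p) (locally y) (locally (Uf p y)).
Proof.
  intros HU Hy. apply continuity_pt_filterlim. apply PSeries_continuity. rewrite HU. exact Hy.
Qed.

Lemma B_bd b p w xU xV l : CV_radius (Ucoef p) = Finite xU -> CV_radius (Vcoef b) = Finite xV ->
  0 <= w -> 0 < xU -> w * xU < xV ->
  filterlim (Uf p) (at_left xU) (locally l) -> l * Vf b (w * xU) = 1 ->
  ~ ex_series (fun n => Zcoef b p w n * xU ^ n).
Proof.
  intros HU HV Hw HxU HwxU Hl Hq HE. pose proof (Series_correct _ HE) as HS. set (S := Series _) in HS.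
  assert (HV0 : 0 <= Vf b (w * xU)) by (apply V_ge0 with xV; auto; nra).
  assert (Vp : 0 < Vf b (w * xU)).
  { destruct HV0 as [h|h]; auto. rewrite <- h in Hq. lra. }
  assert (HVl : filterlim (fun z => Vf b (w * z)) (at_left xU) (locally (Vf b (w * xU)))).
  { eapply filterlim_filter_le_1. apply filter_le_within.
    apply Vw_cont with xV; auto. rewrite Rabs_right; nra. }
  assert (Hql : filterlim (qf b p w) (at_left xU) (locally 1)).
  { rewrite <- Hq. unfold qf. apply lim_mult. all: try exact (at_left_Filter _). all: auto. }
  assert (HK : forall K, Vf b (w * xU) * (INR K + 1) <= S).
  { intro K.
    assert (Rbar_le (Vf b (w * xU) * (INR K + 1)) S); [|exact H].
    apply (filterlim_le (F := at_left xU)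
      (fun y => Vf b (w * y) * sum_f_R0 (fun k => qf b p w y ^ k) K) (fun _ => S)).
    - apply (filter_imp (fun y => 0 < y /\ y < xU)).
      + intros y [Hy1 Hy2].
        assert (Hg : Good w xU xV y) by (split; [lra| split; [lra| nra]]).
        apply (series_le_lim (fun n => Fc b p w K n * y ^ n) (fun n => Zcoef b p w n * xU ^ n)).
        * intro n. apply Rmult_le_compat. apply F_nonneg; auto. apply pow_le; lra.
          apply F_le_Z; auto. apply pow_incr; lra.
        * apply F_series with xU xV; auto.
        * exact HS.
      + apply filter_and. apply at_left_gt; auto. apply at_left_lt.
    - rewrite <- sum_ones. apply lim_mult. all: try exact (at_left_Filter _). auto.
      apply (lim_sum _ (fun k y => qf b p w y ^ k)). all: try exact (at_left_Filter _).
      intro k. apply lim_pow. all: try exact (at_left_Filter _). auto.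
    - apply filterlim_const. }
  destruct (INR_unbounded (S / Vf b (w * xU))) as [K HK'].
  specialize (HK K).
  apply (Rmult_lt_compat_l (Vf b (w * xU))) in HK'; [|lra].
  replace (Vf b (w * xU) * (S / Vf b (w * xU))) with S in HK' by (field; lra).
  nra.
Qed.

Lemma Ulim_ge0 p xU Ulim : CV_radius (Ucoef p) = Finite xU -> 0 < xU ->
  filterlim (PSeries (Ucoef p)) (at_left xU) (Rbar_locally Ulim) -> Rbar_le 0 Ulim.
Proof.
  intros HU HxU Hl.
  apply (filterlim_le (F := at_left xU) (fun _ => 0) (PSeries (Ucoef p))); auto.
  - apply (filter_imp (fun y => 0 < y /\ y < xU)).
    + intros y Hy. apply U_ge0 with xU; auto; lra.
    + apply filter_and. apply at_left_gt; auto. apply at_left_lt.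
  - apply filterlim_const.
Qed.

Lemma U_lt_lim p xU Ulim t : CV_radius (Ucoef p) = Finite xU ->
  (exists n : nat, (1 <= n)%nat /\ p n <> 0%nat) ->
  filterlim (PSeries (Ucoef p)) (at_left xU) (Rbar_locally Ulim) ->
  0 <= t < xU -> Rbar_lt (Uf p t) Ulim.
Proof.
  intros HU Hp Hl Ht.
  assert (H1 : Uf p t < Uf p ((t + xU)/2)) by (apply U_strict with xU; auto; lra).
  assert (H2 : Rbar_le (Uf p ((t + xU)/2)) Ulim).
  { apply (filterlim_le (F := at_left xU) (fun _ => Uf p ((t + xU)/2)) (PSeries (Ucoef p))); auto.
    - apply (filter_imp (fun y => (t + xU)/2 < y /\ y < xU)).
      + intros y Hy. apply U_mono with xU; auto; lra.
      + apply filter_and. apply at_left_gt; lra. apply at_left_lt.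
    - apply filterlim_const. }
  apply Rbar_lt_le_trans with (Uf p ((t + xU)/2)); auto.
Qed.

Lemma Rbar_mult_pinf_1 v : Rbar_mult p_infty (Finite v) <> Finite 1.
Proof.
  unfold Rbar_mult, Rbar_mult'. destruct (Rle_dec 0 v); [destruct (Rle_lt_or_eq_dec 0 v r)|]; 
  intro H; inversion H; lra.
Qed.

Lemma Rbar_mult_minf_1 v : Rbar_mult m_infty (Finite v) <> Finite 1.
Proof.
  unfold Rbar_mult, Rbar_mult'. destruct (Rle_dec 0 v); [destruct (Rle_lt_or_eq_dec 0 v r)|]; 
  intro H; inversion H; lra.
Qed.

Lemma SOL_XC b p xU xV Ulim w x :
  CV_radius (Vcoef b) = Finite xV -> CV_radius (Ucoef p) = Finite xU ->
  (exists n : nat, (1 <= n)%nat /\ p n <> 0%nat) -> 0 < xU -> 0 <= w ->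
  filterlim (PSeries (Ucoef p)) (at_left xU) (Rbar_locally Ulim) ->
  is_solution b p xU xV Ulim w x -> xc b p w = Finite x.
Proof.
  intros HV HU Hp HxU Hw Hl [Hx0 [HxxU [Hwx Heq]]].
  unfold xc. apply radius_eq. intro n; apply Z_nonneg; auto. lra.
  - destruct HxxU as [Hlt|Heqx].
    + unfold Uext in Heq. destruct (Rlt_dec x xU); [|lra]. simpl in Heq. injection Heq as Heq.
      intros y Hy. apply A_conv with xU xV; auto.
      split; [lra| split; [lra| nra]].
      assert (Hu : Uf p y < Uf p x) by (apply U_strict with xU; auto; lra).
      assert (Hv : Vf b (w * y) <= Vf b (w * x)) by (apply V_mono with xV; auto; nra).
      assert (Hu0 : 0 <= Uf p y) by (apply U_ge0 with xU; auto; lra).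
      assert (Hv0 : 0 <= Vf b (w * y)) by (apply V_ge0 with xV; auto; nra).
      assert (Hvx : 0 <= Vf b (w * x)) by (apply V_ge0 with xV; auto; nra).
      unfold qf. change (PSeries (Ucoef p) x * PSeries (Vcoef b) (w * x) = 1) in Heq.
      fold (Uf p x) (Vf b (w * x)) in Heq.
      assert (Hvp : 0 < Vf b (w * x)) by (destruct Hvx as [h|h]; [auto| rewrite <- h in Heq; lra]).
      assert (0 < (Uf p x - Uf p y) * Vf b (w * x)) by (apply Rmult_lt_0_compat; lra).
      assert (0 <= Uf p y * (Vf b (w * x) - Vf b (w * y))) by (apply Rmult_le_pos; lra).
      nra.
    + subst x. unfold Uext in Heq. destruct (Rlt_dec xU xU); [lra|].
      destruct Ulim as [l| |]; [| exfalso; exact (Rbar_mult_pinf_1 _ Heq) | exfalso; exact (Rbar_mult_minf_1 _ Heq)].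
      simpl in Heq. injection Heq as Heq. fold (Vf b (w * xU)) in Heq.
      intros y Hy. apply A_conv with xU xV; auto.
      split; [lra| split; [lra| nra]].
      assert (Hu : Rbar_lt (Uf p y) l) by (apply U_lt_lim with xU; auto; lra). simpl in Hu.
      assert (Hv : Vf b (w * y) <= Vf b (w * xU)) by (apply V_mono with xV; auto; nra).
      assert (Hu0 : 0 <= Uf p y) by (apply U_ge0 with xU; auto; lra).
      assert (Hv0 : 0 <= Vf b (w * y)) by (apply V_ge0 with xV; auto; nra).
      assert (Hvx : 0 <= Vf b (w * xU)) by (apply V_ge0 with xV; auto; nra).
      assert (Hvp : 0 < Vf b (w * xU)) by (destruct Hvx as [h|h]; [auto| rewrite <- h in Heq; lra]).
      assert (0 < (l - Uf p y) * Vf b (w * xU)) by (apply Rmult_lt_0_compat; lra).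
      assert (0 <= Uf p y * (Vf b (w * xU) - Vf b (w * y))) by (apply Rmult_le_pos; lra).
      unfold qf. nra.
  - intros r Hr Hex.
    assert (Hex' : ex_series (fun n => Zcoef b p w n * x ^ n)).
    { apply ex_series_le_R with (fun n => Zcoef b p w n * r ^ n); auto. intro n. split.
      apply Rmult_le_pos; [apply Z_nonneg; auto| apply pow_le; lra].
      apply Rmult_le_compat_l; [apply Z_nonneg; auto| apply pow_incr; lra]. }
    destruct HxxU as [Hlt|Heqx].
    + unfold Uext in Heq. destruct (Rlt_dec x xU); [|lra]. simpl in Heq. injection Heq as Heq.
      apply (B_int b p w xU xV x); auto. split; [lra| split; lra].
    + subst x. unfold Uext in Heq. destruct (Rlt_dec xU xU); [lra|].
      destruct Ulim as [l| |]; [| exfalso; exact (Rbar_mult_pinf_1 _ Heq) | exfalso; exact (Rbar_mult_minf_1 _ Heq)].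
      simpl in Heq. injection Heq as Heq.
      apply (B_bd b p w xU xV l); auto.
Qed.

Lemma XC_U b p xU xV l w wc :
  CV_radius (Vcoef b) = Finite xV -> CV_radius (Ucoef p) = Finite xU ->
  (exists n : nat, (1 <= n)%nat /\ p n <> 0%nat) -> (exists m, b m <> 0%nat) ->
  0 < xU -> 0 < w -> w < wc -> wc * xU < xV ->
  filterlim (PSeries (Ucoef p)) (at_left xU) (Rbar_locally (Finite l)) ->
  l * Vf b (wc * xU) = 1 -> xc b p w = Finite xU.
Proof.
  intros HV HU Hp [m Hm] HxU Hw Hwwc Hwc Hl Hq.
  assert (Hvc : 0 <= Vf b (wc * xU)) by (apply V_ge0 with xV; auto; nra).
  unfold xc. apply radius_eq. intro n; apply Z_nonneg; lra. lra.
  - intros y Hy. apply A_conv with xU xV; auto. lra.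
    split; [lra| split; [lra| nra]].
    assert (Hu : Rbar_lt (Uf p y) (Finite l)) by (apply U_lt_lim with xU; auto; lra). simpl in Hu.
    assert (Hv : Vf b (w * y) <= Vf b (wc * xU)) by (apply V_mono with xV; auto; nra).
    assert (Hu0 : 0 <= Uf p y) by (apply U_ge0 with xU; auto; lra).
    assert (Hv0 : 0 <= Vf b (w * y)) by (apply V_ge0 with xV; auto; nra).
    assert (Hvp : 0 < Vf b (wc * xU)) by (destruct Hvc as [h|h]; [auto| rewrite <- h in Hq; lra]).
    assert (0 < (l - Uf p y) * Vf b (wc * xU)) by (apply Rmult_lt_0_compat; lra).
    assert (0 <= Uf p y * (Vf b (wc * xU) - Vf b (w * y))) by (apply Rmult_le_pos; lra).
    unfold qf. nra.
  - intros r Hr Hex.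
    set (c := Vwcoef b w m).
    assert (Hc : 0 < c).
    { unfold c, Vwcoef. apply Rmult_lt_0_compat. apply lt_0_INR; lia. apply pow_lt; lra. }
    assert (HR2 : 0 < r ^ (m + m)) by (apply pow_lt; lra).
    set (D := c * c * r ^ (m + m)).
    assert (HD : 0 < D) by (unfold D; apply Rmult_lt_0_compat; nra).
    assert (Hsh : ex_series (fun k => / D * (Zcoef b p w ((m + m) + k) * r ^ ((m + m) + k)))).
    { apply ex_series_scal_R. apply (ex_series_incr_n (fun n => Zcoef b p w n * r ^ n) (m + m)). exact Hex. }
    assert (Hu : ex_series (fun k => Ucoef p k * r ^ k)).
    { apply ex_series_le_R with (2 := Hsh). intro k.
      split. apply Rmult_le_pos; [apply U_nonneg| apply pow_le; lra].
      pose proof (Z_lower b p w m (m + m + k) ltac:(lra) ltac:(lia)) as HZ.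
      replace (m + m + k - m - m)%nat with k in HZ by lia. fold c in HZ.
      rewrite pow_add.
      apply Rmult_le_reg_l with D; auto.
      rewrite <- (Rmult_assoc D (/ D)), Rinv_r by lra. rewrite Rmult_1_l.
      unfold D. assert (0 <= r ^ k) by (apply pow_le; lra).
      replace (c * c * r ^ (m + m) * (Ucoef p k * r ^ k)) with ((c * (c * Ucoef p k)) * (r ^ (m + m) * r ^ k)) by ring.
      apply Rmult_le_compat_r; [nra| exact HZ]. }
    apply ex_series_lim_0 in Hu.
    apply (CV_disk_outside (Ucoef p) r); auto.
    rewrite HU. simpl. rewrite Rabs_right; lra.
Qed.

Lemma b_nonzero b xV :
  filterlim (PSeries (Vcoef b)) (at_left xV) (Rbar_locally p_infty) -> exists m, b m <> 0%nat.
Proof.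
  intros Hl. apply NNPP. intro Hn.
  assert (Hz : forall t, PSeries (Vcoef b) t = 0).
  { intro t. rewrite <- (PSeries_const_0 t). apply PSeries_ext. intro n.
    unfold Vcoef. destruct (Nat.eq_dec (b n) 0) as [e|e]. rewrite e; reflexivity.
    exfalso; apply Hn; eauto. }
  assert (H : at_left xV (fun y => 0 < PSeries (Vcoef b) y)).
  { apply Hl. exists 0. auto. }
  destruct (ev_ex _ _ H) as [y Hy]. rewrite Hz in Hy. lra.
Qed.

Lemma lin_left w xV : 0 < w -> filterlim (fun y => w * y) (at_left (xV / w)) (at_left xV).
Proof.
  intros Hw P [eps HP]. unfold filtermap, at_left, within.
  assert (He : 0 < eps / w) by (apply Rdiv_lt_0_compat; [apply cond_pos| lra]).
  exists (mkposreal _ He). intros y Hy Hlt. simpl in Hy.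
  apply HP.
  - unfold ball in *; simpl in *; unfold AbsRing_ball, abs, minus, plus, opp in *; simpl in *.
    replace (w * y + - xV) with (w * (y + - (xV / w))) by (field; lra).
    rewrite Rabs_mult, (Rabs_right w) by lra.
    apply Rmult_lt_compat_l with (r := w) in Hy; [|lra].
    replace (w * (eps / w)) with (pos eps) in Hy by (field; lra). exact Hy.
  - apply Rmult_lt_compat_l with (r := w) in Hlt; [|lra].
    replace (w * (xV / w)) with xV in Hlt by (field; lra). exact Hlt.
Qed.

Lemma qf_cont b p w xU xV t : CV_radius (Vcoef b) = Finite xV -> CV_radius (Ucoef p) = Finite xU ->
  0 <= w -> 0 <= t < xU -> w * t < xV -> continuity_pt (qf b p w) t.
Proof.
  intros HV HU Hw Ht Hwt. apply continuity_pt_filterlim. unfold qf.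
  apply (lim_mult (locally t)). 
  - apply U_cont with xU; auto. rewrite Rabs_right; lra.
  - apply Vw_cont with xV; auto. rewrite Rabs_right; nra.
Qed.

Lemma EXIST b p xU xV Ulim wc w :
  (exists n : nat, (1 <= n)%nat /\ p n <> 0%nat) ->
  CV_radius (Vcoef b) = Finite xV ->
  CV_radius (Ucoef p) = Finite xU ->
  0 < xU -> xU < xV ->
  filterlim (PSeries (Vcoef b)) (at_left xV) (Rbar_locally p_infty) ->
  filterlim (PSeries (Ucoef p)) (at_left xU) (Rbar_locally Ulim) ->
  is_wc b xU xV Ulim wc -> 1 <= w -> wc <= w ->
  exists x, is_solution b p xU xV Ulim w x.
Proof.
  intros Hp HV HU HxU HxUV HVl HUl [W1 W2] Hw1 Hwc.
  pose proof (b_nonzero b xV HVl) as Hb.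
  pose proof (Ulim_ge0 p xU Ulim HU HxU HUl) as HUl0.
  assert (Hy0 : (exists y0, 0 < y0 /\ Good w xU xV y0 /\ 1 < qf b p w y0) \/
                (exists l, Ulim = Finite l /\ w * xU < xV /\ l * Vf b (w * xU) = 1)).
  { destruct (Rlt_le_dec (w * xU) xV) as [HA|HB].
    - assert (Hvp : 0 < Vf b (w * xU)) by (apply V_pos with xV; auto; nra).
      destruct Ulim as [l| |].
      + simpl in HUl0.
        assert (H1 : 1 <= l * Vf b (w * xU)).
        { destruct (classic (Finite l = p_infty \/
             Rbar_le (Finite 1) (Rbar_mult (Finite l) (Finite (PSeries (Vcoef b) xU))))) as [C|C].
          - destruct C as [C|C]; [discriminate|]. simpl in C.
            assert (Vf b xU <= Vf b (w * xU)) by (apply V_mono with xV; auto; nra).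
            unfold Vf in *. nra.
          - destruct (W2 C) as [Hwc1 [Hwc2 Hwc3]]. simpl in Hwc3. injection Hwc3 as Hwc3.
            assert (Vf b (wc * xU) <= Vf b (w * xU)) by (apply V_mono with xV; auto; nra).
            unfold Vf in *. nra. }
        destruct H1 as [H1|H1]; [left|right; eauto].
        assert (HVl' : filterlim (fun z => Vf b (w * z)) (at_left xU) (locally (Vf b (w * xU)))).
        { eapply filterlim_filter_le_1. apply filter_le_within.
          apply Vw_cont with xV; auto. rewrite Rabs_right; nra. }
        assert (Hql : filterlim (qf b p w) (at_left xU) (locally (l * Vf b (w * xU)))).
        { unfold qf. apply lim_mult. all: try exact (at_left_Filter _). all: auto. }
        assert (Hev : at_left xU (fun y => 1 < qf b p w y)).
        { apply Hql. apply (open_gt 1). exact H1. }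
        assert (Hev2 : at_left xU (fun y => 1 < qf b p w y /\ (0 < y /\ y < xU))).
        { apply filter_and; auto. apply filter_and. apply at_left_gt; auto. apply at_left_lt. }
        destruct (ev_ex _ _ Hev2) as [y [Hy1 [Hy2 Hy3]]].
        assert (w * y < w * xU) by (apply Rmult_lt_compat_l; lra).
        exists y. split; [lra|]. split; [|exact Hy1]. split; [lra| split; lra].
      + left. set (c := Vf b (w * (xU / 2))).
        assert (Hc : 0 < c) by (apply V_pos with xV; auto; split; nra).
        assert (Hev : at_left xU (fun y => 2 / c < PSeries (Ucoef p) y /\ (xU / 2 < y /\ y < xU))).
        { apply filter_and. apply HUl. exists (2 / c). auto.
          apply filter_and. apply at_left_gt; lra. apply at_left_lt. }
        destruct (ev_ex _ _ Hev) as [y [Hy1 [Hy2 Hy3]]].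
        assert (Hcv : c <= Vf b (w * y)) by (apply V_mono with xV; auto; nra).
        exists y. split; [lra|]. split; [split; [lra| split; [lra| nra]]|].
        unfold qf. fold (Uf p y) in Hy1.
        assert (2 / c * c = 2) by (field; lra).
        assert (0 < 2 / c) by (apply Rdiv_lt_0_compat; lra).
        assert (2 / c * c < Uf p y * c) by (apply Rmult_lt_compat_r; lra).
        assert (Uf p y * c <= Uf p y * Vf b (w * y)) by (apply Rmult_le_compat_l; lra). lra.
      + exfalso. exact HUl0.
    - left. assert (Hw0 : 0 < w) by lra.
      set (m' := xV / w).
      assert (Hm' : 0 < m' <= xU).
      { unfold m'. split. apply Rdiv_lt_0_compat; lra.
        apply Rmult_le_reg_l with w; auto. replace (w * (xV / w)) with xV by (field; lra). lra. }
      set (c := Uf p (m' / 2)).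
      assert (Hc : 0 < c).
      { unfold c. rewrite <- (U0 p). apply U_strict with xU; auto; lra. }
      assert (HVinf : filterlim (fun y => PSeries (Vcoef b) (w * y)) (at_left m') (Rbar_locally p_infty)).
      { apply (filterlim_comp _ _ _ (fun y => w * y) (PSeries (Vcoef b)) _ (at_left xV)).
        apply lin_left; auto. exact HVl. }
      assert (Hev : at_left m' (fun y => 2 / c < PSeries (Vcoef b) (w * y) /\ (m' / 2 < y /\ y < m'))).
      { apply filter_and. apply HVinf. exists (2 / c). auto.
        apply filter_and. apply at_left_gt; lra. apply at_left_lt. }
      destruct (ev_ex _ _ Hev) as [y [Hy1 [Hy2 Hy3]]].
      assert (Hwy : w * y < xV).
      { apply Rmult_lt_compat_l with (r := w) in Hy3; auto.
        unfold m' in Hy3. replace (w * (xV / w)) with xV in Hy3 by (field; lra). exact Hy3. }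
      assert (Hcu : c <= Uf p y) by (apply U_mono with xU; auto; lra).
      exists y. split; [lra|]. split; [split; [lra| split; [lra| lra]]|].
      unfold qf. fold (Vf b (w * y)) in Hy1.
      assert (2 / c * c = 2) by (field; lra).
      assert (0 < 2 / c) by (apply Rdiv_lt_0_compat; lra).
      assert (c * (2 / c) < c * Vf b (w * y)) by (apply Rmult_lt_compat_l; lra).
      assert (c * Vf b (w * y) <= Uf p y * Vf b (w * y)) by (apply Rmult_le_compat_r; lra). lra. }
  destruct Hy0 as [[y0 [Hy0 [Hg Hq]]] | [l [Hl1 [Hl2 Hl3]]]].
  - destruct Hg as [G1 [G2 G3]].
    assert (Hw0 : 0 <= w) by lra.
    destruct (IVT_Rbar_incr (qf b p w) (Finite 0) (Finite y0) (Finite (qf b p w 0)) (Finite (qf b p w y0)) 1)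
      as [x [Hx1 [Hx2 Hx3]]].
    + apply is_lim_continuity. apply qf_cont with xU xV; auto; lra.
    + apply is_lim_continuity. apply qf_cont with xU xV; auto; lra.
    + intros x Hx1 Hx2. simpl in Hx1, Hx2. apply qf_cont with xU xV; auto; try lra. nra.
    + simpl. lra.
    + simpl. unfold qf at 1. rewrite U0, Rmult_0_l. split; lra.
    + simpl in Hx1, Hx2. exists x. split; [lra| split; [lra| split; [nra|]]].
      unfold Uext. destruct (Rlt_dec x xU); [|lra]. simpl. unfold qf, Uf, Vf in Hx3. rewrite Hx3. reflexivity.
  - exists xU. split; [lra| split; [lra| split; [lra|]]].
    unfold Uext. destruct (Rlt_dec xU xU); [lra|]. rewrite Hl1. simpl. unfold Vf in Hl3. rewrite Hl3. reflexivity.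
Qed.

Theorem theorem1 (b p : nat -> nat) (xU xV : R) (Ulim : Rbar) (wc : R) :
  (exists n : nat, (1 <= n)%nat /\ p n <> 0%nat) ->
  CV_radius (Vcoef b) = Finite xV ->
  CV_radius (Ucoef p) = Finite xU ->
  0 < xU -> xU < xV -> xV <= 1 ->
  filterlim (PSeries (Vcoef b)) (at_left xV) (Rbar_locally p_infty) ->
  filterlim (PSeries (Ucoef p)) (at_left xU) (Rbar_locally Ulim) ->
  is_wc b xU xV Ulim wc ->
  (forall w : R, 1 <= w -> wc <= w ->
     exists x : R,
       is_solution b p xU xV Ulim w x /\
       (forall y : R, is_solution b p xU xV Ulim w y -> y = x) /\
       xc b p w = Finite x /\ free_energy b p w = - ln x) /\
  (forall w : R, 1 < w -> w < wc ->
       xc b p w = Finite xU /\ free_energy b p w = - ln xU).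
Proof.
  intros Hp HV HU HxU HxUV HxV1 HVl HUl Hwc. split.
  - intros w Hw1 Hwcw.
    destruct (EXIST b p xU xV Ulim wc w Hp HV HU HxU HxUV HVl HUl Hwc Hw1 Hwcw) as [x Hx].
    assert (Hxc : xc b p w = Finite x) by (apply SOL_XC with xU xV Ulim; auto; lra).
    exists x. split; auto. split.
    + intros y Hy. assert (Hyc : xc b p w = Finite y) by (apply SOL_XC with xU xV Ulim; auto; lra).
      rewrite Hxc in Hyc. injection Hyc. auto.
    + split; auto. unfold free_energy. rewrite Hxc. reflexivity.
  - intros w Hw1 Hwwc. destruct Hwc as [W1 W2].
    destruct (classic (Ulim = p_infty \/
             Rbar_le (Finite 1) (Rbar_mult Ulim (Finite (PSeries (Vcoef b) xU))))) as [C|C].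
    + specialize (W1 C). lra.
    + destruct (W2 C) as [Hwc1 [Hwc2 Hwc3]].
      destruct Ulim as [l| |].
      * simpl in Hwc3. injection Hwc3 as Hwc3.
        assert (Hxc : xc b p w = Finite xU).
        { apply XC_U with xV l wc; auto. apply b_nonzero with xV; auto. lra. }
        split; auto. unfold free_energy. rewrite Hxc. reflexivity.
      * exfalso. apply C. left. reflexivity.
      * exfalso. exact (Rbar_mult_minf_1 _ Hwc3).
Qed.
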